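(* Under the standing assumptions below, let $P\in M_2(\mathbb C)$ be a rank-one idempotent with $\theta(S_1)\subseteq\overline B_P(12\delta)\cup\overline B_{I-P}(12\delta)$, and set $S_p=\theta^{-1}(\overline B_P(12\delta))$, $S_q=\theta^{-1}(\overline B_{I-P}(12\delta))$. Let $e\in S_2$. If $f\in S_p$ then $ef\in S_p$; if $f\in S_q$ then $ef\in S_q$.
   Context: Standing assumptions: $S$ is a semilattice (commutative semigroup of idempotents), $0\le\delta<0.03$, and $\theta:S\to M_2(\mathbb C)$ satisfies $\|\theta(e)\theta(f)-\theta(ef)\|_{HS}\le\delta$ for all $e,f\in S$, where $\|A\|_{HS}=(\operatorname{tr}(A^*A))^{1/2}$. For $k\in\{0,1,2\}$, $S_k=\{x\in S:\ |\operatorname{tr}\theta(x)-k|<0.95\}$; these sets are pairwise disjoint and cover $S$. $\overline B_A(r)=\{B\in M_2(\mathbb C):\|A-B\|_{HS}\le r\}$. *)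

(* Defs.v *)
From HB Require Import structures.
From mathcomp Require Import all_boot all_order all_algebra.
Set Implicit Arguments. Unset Strict Implicit. Unset Printing Implicit Defensive.
Import Order.TTheory GRing.Theory Num.Theory.
Local Open Scope ring_scope.

(* Complex numbers are modelled by an arbitrary numClosedFieldType C
   (algebraically closed field with conjugation, norm and partial order);
   the complex field is an instance, so the statement is (slightly) more general. *)

Definition adjmx (C : numClosedFieldType) (m n : nat) (A : 'M[C]_(m, n)) : 'M[C]_(n, m) :=
  (map_mx Num.conj A)^T.

Definition hsnorm (C : numClosedFieldType) (n : nat) (A : 'M[C]_n) : C :=
  sqrtC (\tr (adjmx A *m A)).

Definition in_cball (C : numClosedFieldType) (n : nat) (A : 'M[C]_n) (r : C) (B : 'M[C]_n) : Prop :=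
  hsnorm (A - B) <= r.

Definition Sk (C : numClosedFieldType) (S : Type) (theta : S -> 'M[C]_2) (k : nat) (x : S) : Prop :=
  `|\tr (theta x) - k%:R| < 95%:R / 100%:R.

Definition is_semilattice (S : Type) (mul : S -> S -> S) : Prop :=
  (forall a b c, mul a (mul b c) = mul (mul a b) c) /\
  (forall a b, mul a b = mul b a) /\
  (forall a, mul a a = a).

(* Main.v *)
Require Import Defs.
From HB Require Import structures.
From mathcomp Require Import all_boot all_order all_algebra.
From mathcomp Require Import ring lra.
Import Order.TTheory GRing.Theory Num.Theory.
Local Open Scope ring_scope.
Set Implicit Arguments. Unset Strict Implicit. Unset Printing Implicit Defensive.

Section RealSub.
Variable C : numClosedFieldType.
Record rl := Rl {rlval :> C; rlvalP : rlval \is Num.real}.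
HB.instance Definition _ := [isSub for rlval].
HB.instance Definition _ := [Choice of rl by <:].
HB.instance Definition _ := [SubChoice_isSubIntegralDomain of rl by <:].
HB.instance Definition _ := [SubIntegralDomain_isSubField of rl by <:].
HB.instance Definition _ : Order.isPOrder ring_display rl :=
  Order.CancelPartial.Pcan _ valK.
Lemma total_rl : total (<=%O : rel (rl : porderType _)).
Proof. by move=> x y; apply/real_leVge/valP/valP. Qed.
HB.instance Definition _ := Order.POrder_isTotal.Build _ rl total_rl.
Lemma rlval_is_zmod_morphism : zmod_morphism rlval. Proof. by []. Qed.
Lemma rlval_is_monoid_morphism : monoid_morphism rlval. Proof. by []. Qed.
HB.instance Definition _ := GRing.isZmodMorphism.Build rl C rlval
  rlval_is_zmod_morphism.
HB.instance Definition _ := GRing.isMonoidMorphism.Build rl C rlval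
  rlval_is_monoid_morphism.
Definition rl_norm (x : rl) : rl := Rl (normr_real (val x)).
Lemma rl_ler_normD x y : rl_norm (x + y) <= (rl_norm x + rl_norm y).
Proof. exact: ler_normD. Qed.
Lemma rl_normr0_eq0 x : rl_norm x = 0 -> x = 0.
Proof. by move=> /(congr1 val)/normr0_eq0 ?; apply/val_inj. Qed.
Lemma rl_normrMn x n : rl_norm (x *+ n) = rl_norm x *+ n.
Proof. by apply/val_inj; rewrite /= !rmorphMn/= normrMn. Qed.
Lemma rl_normrN x : rl_norm (- x) = rl_norm x.
Proof. by apply/val_inj; apply: normrN. Qed.
Section withz.
Let z : rl := 0.
Lemma rl_addr_gt0 (x y : rl) : z < x -> z < y -> z < x + y.
Proof. exact: addr_gt0. Qed.
Lemma rl_ger_leVge (x y : rl) : z <= x -> z <= y -> (x <= y) || (y <= x).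
Proof. exact: ger_leVge. Qed.
Lemma rl_normrM : {morph rl_norm : x y / x * y}.
Proof. by move=> *; apply/val_inj; apply: normrM. Qed.
Lemma rl_ler_def (x y : rl) : (x <= y) = (rl_norm (y - x) == y - x).
Proof. by apply: ler_def. Qed.
End withz.
HB.instance Definition _ := Num.Zmodule_isNormed.Build _ rl
  rl_ler_normD rl_normr0_eq0 rl_normrMn rl_normrN.
HB.instance Definition _ := Num.isNumRing.Build rl
  rl_addr_gt0 rl_ger_leVge rl_normrM rl_ler_def.

Lemma leE (x y : rl) : (x <= y) = (val x <= val y). Proof. by []. Qed.
Lemma ltE (x y : rl) : (x < y) = (val x < val y). Proof. by []. Qed.
End RealSub.
Lemma prod_lb (R : realFieldType) (a b c d : R) :
  0 <= c -> 0 <= d -> c <= a -> d <= b -> c * d <= a * b.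
Proof. move=> c0 d0 ca db; apply: ler_pM => //. Qed.

Lemma sq_le (R : realFieldType) (a b : R) : 0 <= b -> a * a <= b * b -> a <= b.
Proof.
move=> b0 h; case: (lerP a b) => // hab.
have a0 : 0 < a := le_lt_trans b0 hab.
have h1 : b * b <= b * a := ler_wpM2l b0 (ltW hab).
have h2 : b * a < a * a by rewrite ltr_pM2r.
have := le_lt_trans h1 h2.
by rewrite ltNge h.
Qed.

Lemma CS2 (R : realFieldType) (p q r s : R) :
  (p * q + r * s) * (p * q + r * s) <= (p * p + r * r) * (q * q + s * s).
Proof.
have h : (p * p + r * r) * (q * q + s * s) - (p * q + r * s) * (p * q + r * s)
   = (p * s - r * q) * (p * s - r * q) by ring.
rewrite -subr_ge0 h; exact: sqr_ge0.
Qed.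

Lemma CS4 (R : realFieldType) (x1 x2 x3 x4 y1 y2 y3 y4 a b : R) :
  0 <= a -> 0 <= b ->
  a * a = x1 * x1 + x2 * x2 + x3 * x3 + x4 * x4 ->
  b * b = y1 * y1 + y2 * y2 + y3 * y3 + y4 * y4 ->
  x1 * y1 + x2 * y2 + x3 * y3 + x4 * y4 <= a * b.
Proof.
move=> a0 b0 ha hb.
have ab0 : 0 <= a * b by rewrite mulr_ge0.
apply: sq_le => //.
have -> : (a * b) * (a * b) = (a * a) * (b * b) by ring.
rewrite ha hb -subr_ge0.
set S1 := (x1*y2 - x2*y1)^+2 + (x1*y3 - x3*y1)^+2 + (x1*y4 - x4*y1)^+2 +
  (x2*y3 - x3*y2)^+2 + (x2*y4 - x4*y2)^+2 + (x3*y4 - x4*y3)^+2.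
have hS : 0 <= S1 by rewrite /S1 !addr_ge0 ?sqr_ge0.
suff <- : S1 = (x1 * x1 + x2 * x2 + x3 * x3 + x4 * x4) * (y1 * y1 + y2 * y2 + y3 * y3 + y4 * y4) -
  (x1 * y1 + x2 * y2 + x3 * y3 + x4 * y4) * (x1 * y1 + x2 * y2 + x3 * y3 + x4 * y4) by [].
rewrite /S1; ring.
Qed.

Lemma tri4 (R : realFieldType) (x1 x2 x3 x4 y1 y2 y3 y4 z1 z2 z3 z4 a b h : R) :
  0 <= x1 -> 0 <= x2 -> 0 <= x3 -> 0 <= x4 ->
  0 <= y1 -> 0 <= y2 -> 0 <= y3 -> 0 <= y4 ->
  0 <= z1 -> 0 <= z2 -> 0 <= z3 -> 0 <= z4 ->
  0 <= a -> 0 <= b -> 0 <= h ->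
  z1 <= x1 + y1 -> z2 <= x2 + y2 -> z3 <= x3 + y3 -> z4 <= x4 + y4 ->
  a * a = x1 * x1 + x2 * x2 + x3 * x3 + x4 * x4 ->
  b * b = y1 * y1 + y2 * y2 + y3 * y3 + y4 * y4 ->
  h * h = z1 * z1 + z2 * z2 + z3 * z3 + z4 * z4 ->
  h <= a + b.
Proof.
move=> ? ? ? ? ? ? ? ? H7 H8 H9 H10 a0 b0 h0 e1 e2 e3 e4 ha hb hh.
apply: sq_le; first by rewrite addr_ge0.
have c := CS4 a0 b0 ha hb.
have s1 := prod_lb (a:=x1+y1) (b:=x1+y1) H7 H7 e1 e1.
have s2 := prod_lb (a:=x2+y2) (b:=x2+y2) H8 H8 e2 e2.
have s3 := prod_lb (a:=x3+y3) (b:=x3+y3) H9 H9 e3 e3.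
have s4 := prod_lb (a:=x4+y4) (b:=x4+y4) H10 H10 e4 e4.
have -> : (a + b) * (a + b) = a * a + b * b + 2 * (a * b) by ring.
rewrite hh ha hb.
have e : forall u v : R, (u + v) * (u + v) = u * u + v * v + 2 * (u * v) by move=> u v; ring.
rewrite !e in s1 s2 s3 s4.
clear -c s1 s2 s3 s4; lra.
Qed.
Lemma RL1 (R : realFieldType) (x v w T K D dl : R) :
  0 <= x -> 0 <= v -> 0 <= w -> 0 <= T -> 0 <= K -> 0 <= D -> 0 <= dl ->
  dl < 3/100 -> x < 95/100 ->
  T^+2 + v^+2 * K <= 2 * dl^+2 ->
  w * x <= K + 2 * T -> 1 <= v + x -> 2 <= w + x -> v <= x + 1 ->
  w * v <= 2 * D + T ->
  83/100 <= D /\ v <= 11/10.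
Proof.
move=> x0 v0 w0 T0 K0 D0 d0 d3 x95 hQ hK h1 h2 h3 h4.
rewrite !expr2 in hQ.
have hdd : dl * dl <= (3/100) * (3/100) by apply: prod_lb => //; clear -d3; lra.
have vK0 : 0 <= v * v * K by rewrite mulr_ge0 ?mulr_ge0.
have TT0 : 0 <= T * T by rewrite mulr_ge0.
have hT2 : T * T <= 18/10000 by clear -hdd hQ vK0; lra.
have hvK : v * v * K <= 18/10000 by clear -hdd hQ TT0; lra.
have hT : T <= 43/1000.
  case: (lerP T (43/1000)) => // hT.
  have : (43/1000) * (43/1000) <= T * T by apply: prod_lb; clear -hT; lra.
  clear -hT2; lra.
have hx : x <= 1/10.
  case: (lerP x (1/10)) => // hx1; exfalso.
  have hwx : (2 - x) * x <= w * x by apply: ler_wpM2r => //; clear -h2; lra.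
  case: (lerP x (3/10)) => hx0.
    have hh : 17/10 * (1/10) <= (2 - x) * x by apply: prod_lb; clear -hx1 hx0; lra.
    have hKl : 8/100 <= K by clear -hh hwx hK hT; lra.
    have hv : 7/10 <= v by clear -h1 hx0; lra.
    have hvv : 7/10 * (7/10) <= v * v by apply: prod_lb; clear -hv; lra.
    have : (7/10 * (7/10)) * (8/100) <= (v * v) * K by apply: prod_lb => //; clear; lra.
    clear -hvK; lra.
  case: (lerP x (8/10)) => hx2.
    have hh : 12/10 * (3/10) <= (2 - x) * x by apply: prod_lb; clear -hx0 hx2; lra.
    have hKl : 27/100 <= K by clear -hh hwx hK hT; lra.
    have hv : 2/10 <= v by clear -h1 hx2; lra.
    have hvv : 2/10 * (2/10) <= v * v by apply: prod_lb; clear -hv; lra.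
    have : (2/10 * (2/10)) * (27/100) <= (v * v) * K by apply: prod_lb => //; clear; lra.
    clear -hvK; lra.
  case: (lerP x (9/10)) => hx3.
    have hh : 11/10 * (8/10) <= (2 - x) * x by apply: prod_lb; clear -hx2 hx3; lra.
    have hKl : 79/100 <= K by clear -hh hwx hK hT; lra.
    have hv : 1/10 <= v by clear -h1 hx3; lra.
    have hvv : 1/10 * (1/10) <= v * v by apply: prod_lb; clear -hv; lra.
    have : (1/10 * (1/10)) * (79/100) <= (v * v) * K by apply: prod_lb => //; clear; lra.
    clear -hvK; lra.
  have hh : 105/100 * (9/10) <= (2 - x) * x by apply: prod_lb; clear -hx3 x95; lra.
  have hKl : 85/100 <= K by clear -hh hwx hK hT; lra.
  have hv : 5/100 <= v by clear -h1 x95; lra.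
  have hvv : 5/100 * (5/100) <= v * v by apply: prod_lb; clear -hv; lra.
  have : (5/100 * (5/100)) * (85/100) <= (v * v) * K by apply: prod_lb => //; clear; lra.
  clear -hvK; lra.
have hh : 19/10 * (9/10) <= w * v by apply: prod_lb; clear -hx h1 h2; lra.
split; clear -hh h4 hT hx h3; lra.
Qed.
Lemma sq_eq (R : realFieldType) (a b : R) : 0 <= a -> 0 <= b -> a * a = b * b -> a = b.
Proof. move=> a0 b0 h; apply/le_anti/andP; split; apply: sq_le; by rewrite // h. Qed.

Lemma sqz (R : realFieldType) (z w : R) : 0 <= z -> z <= w -> z * z <= w * w.
Proof. move=> z0 zw; apply: prod_lb => //. Qed.

Lemma mul4 (R : realFieldType) (a00 a01 a10 a11 b00 b01 b10 b11 z00 z01 z10 z11 a b h : R) :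
  0 <= a00 -> 0 <= a01 -> 0 <= a10 -> 0 <= a11 ->
  0 <= b00 -> 0 <= b01 -> 0 <= b10 -> 0 <= b11 ->
  0 <= z00 -> 0 <= z01 -> 0 <= z10 -> 0 <= z11 ->
  0 <= a -> 0 <= b -> 0 <= h ->
  z00 <= a00 * b00 + a01 * b10 -> z01 <= a00 * b01 + a01 * b11 ->
  z10 <= a10 * b00 + a11 * b10 -> z11 <= a10 * b01 + a11 * b11 ->
  a * a = a00 * a00 + a01 * a01 + a10 * a10 + a11 * a11 ->
  b * b = b00 * b00 + b01 * b01 + b10 * b10 + b11 * b11 ->
  h * h = z00 * z00 + z01 * z01 + z10 * z10 + z11 * z11 ->
  h <= a * b.
Proof.
move=> _ _ _ _ _ _ _ _ g00 g01 g10 g11 a0 b0 h0 e00 e01 e10 e11 ha hb hh.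
apply: sq_le; first by rewrite mulr_ge0.
have -> : a * b * (a * b) = (a * a) * (b * b) by ring.
rewrite hh ha hb.
have s00 := le_trans (sqz g00 e00) (CS2 a00 b00 a01 b10).
have s01 := le_trans (sqz g01 e01) (CS2 a00 b01 a01 b11).
have s10 := le_trans (sqz g10 e10) (CS2 a10 b00 a11 b10).
have s11 := le_trans (sqz g11 e11) (CS2 a10 b01 a11 b11).
have -> : (a00 * a00 + a01 * a01 + a10 * a10 + a11 * a11) *
    (b00 * b00 + b01 * b01 + b10 * b10 + b11 * b11) =
  (a00 * a00 + a01 * a01) * (b00 * b00 + b10 * b10) +
  (a00 * a00 + a01 * a01) * (b01 * b01 + b11 * b11) +
  (a10 * a10 + a11 * a11) * (b00 * b00 + b10 * b10) +
  (a10 * a10 + a11 * a11) * (b01 * b01 + b11 * b11) by ring.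
by rewrite !lerD.
Qed.
Section M.
Variable C : numClosedFieldType.
Local Notation R := (rl C).
Definition nr (z : C) : R := Rl (normr_real z).
Lemma nrE z : val (nr z) = `|z|. Proof. by []. Qed.
Lemma nr_ge0 z : 0 <= nr z. Proof. by rewrite leE /= normr_ge0. Qed.
Lemma nrD x y : nr (x + y) <= nr x + nr y. Proof. by rewrite leE /= ler_normD. Qed.
Lemma nrM x y : nr (x * y) = nr x * nr y. Proof. by apply: val_inj; rewrite /= normrM. Qed.
Lemma nrN x : nr (- x) = nr x. Proof. by apply: val_inj; rewrite /= normrN. Qed.
Lemma nrsq x : val (nr x * nr x) = x * x^*. Proof. by rewrite /= -expr2 normCK. Qed.

Lemma mul2E (A B : 'M[C]_2) i j : (A *m B) i j = A i 0 * B 0 j + A i 1 * B 1 j.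
Proof.
rewrite mxE big_ord_recr big_ord_recr big_ord0 /= add0r.
by congr (_ + _); congr (A i _ * B _ j); apply: val_inj.
Qed.
Lemma tr2E (A : 'M[C]_2) : \tr A = A 0 0 + A 1 1.
Proof.
rewrite /mxtrace big_ord_recr big_ord_recr big_ord0 /= add0r.
by congr (_ + _); congr (A _ _); apply: val_inj.
Qed.
Lemma hs2E (A : 'M[C]_2) : hsnorm A =
  sqrtC (`|A 0 0|^+2 + `|A 0 1|^+2 + `|A 1 0|^+2 + `|A 1 1|^+2).
Proof.
rewrite /hsnorm tr2E !mul2E /adjmx !mxE !normCK; congr sqrtC.
rewrite [A 0 0 * _]mulrC [A 1 0 * _]mulrC [A 0 1 * _]mulrC [A 1 1 * _]mulrC.
ring.
Qed.

Lemma hs_ge0 (A : 'M[C]_2) : 0 <= hsnorm A.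
Proof. by rewrite hs2E sqrtC_ge0 !addr_ge0 ?exprn_ge0 ?normr_ge0. Qed.
Definition hn (A : 'M[C]_2) : R := Rl (ger0_real (hs_ge0 A)).
Lemma hnE A : val (hn A) = hsnorm A. Proof. by []. Qed.
Lemma hn_ge0 A : 0 <= hn A. Proof. by rewrite leE /= hs_ge0. Qed.
Lemma hn_sq A : hn A * hn A = nr (A 0 0) * nr (A 0 0) + nr (A 0 1) * nr (A 0 1)
   + nr (A 1 0) * nr (A 1 0) + nr (A 1 1) * nr (A 1 1).
Proof. by apply: val_inj; rewrite /= -!expr2 hs2E sqrtCK. Qed.

Lemma hn_add A B : hn (A + B) <= hn A + hn B.
Proof.
apply: (tri4 (x1 := nr (A 0 0)) (x2 := nr (A 0 1)) (x3 := nr (A 1 0)) (x4 := nr (A 1 1))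
  (y1 := nr (B 0 0)) (y2 := nr (B 0 1)) (y3 := nr (B 1 0)) (y4 := nr (B 1 1))
  (z1 := nr ((A + B) 0 0)) (z2 := nr ((A + B) 0 1)) (z3 := nr ((A + B) 1 0))
  (z4 := nr ((A + B) 1 1))); rewrite ?nr_ge0 ?hn_ge0 ?hn_sq //; by rewrite mxE nrD.
Qed.
Lemma hn_opp A : hn (- A) = hn A.
Proof. by apply: val_inj; rewrite /= !hs2E !mxE !normrN. Qed.
Lemma hn_sub A B : hn (A - B) = hn (B - A).
Proof. by rewrite -hn_opp opprB. Qed.
Lemma hn_scale c A : hn (c *: A) = nr c * hn A.
Proof.
apply: sq_eq; rewrite ?hn_ge0 ?mulr_ge0 ?nr_ge0 ?hn_ge0 //.
have -> : nr c * hn A * (nr c * hn A) = (nr c * nr c) * (hn A * hn A) by ring.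
rewrite !hn_sq !mxE !nrM; ring.
Qed.
Lemma hn_mul A B : hn (A *m B) <= hn A * hn B.
Proof.
apply: (mul4 (a00 := nr (A 0 0)) (a01 := nr (A 0 1)) (a10 := nr (A 1 0)) (a11 := nr (A 1 1))
  (b00 := nr (B 0 0)) (b01 := nr (B 0 1)) (b10 := nr (B 1 0)) (b11 := nr (B 1 1))
  (z00 := nr ((A *m B) 0 0)) (z01 := nr ((A *m B) 0 1)) (z10 := nr ((A *m B) 1 0))
  (z11 := nr ((A *m B) 1 1))); rewrite ?nr_ge0 ?hn_ge0 ?hn_sq //;
  by rewrite mul2E -!nrM nrD.
Qed.
Lemma hn_tr A : nr (\tr A) * nr (\tr A) <= 2 * (hn A * hn A).
Proof.
rewrite hn_sq tr2E.
have h := sqz (nr_ge0 _) (nrD (A 0 0) (A 1 1)).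
apply: (le_trans h).
have := nr_ge0 (A 0 1); have := nr_ge0 (A 1 0).
have := sqr_ge0 (nr (A 0 0) - nr (A 1 1)).
rewrite expr2; move: (nr (A 0 0)) (nr (A 1 1)) (nr (A 0 1)) (nr (A 1 0)) => p q r s.
move=> h1 h2 h3.
have h4 : 0 <= r * r by rewrite mulr_ge0.
have h5 : 0 <= s * s by rewrite mulr_ge0.
have e : (p - q) * (p - q) = p * p + q * q - 2 * (p * q) by ring.
have e2 : (p + q) * (p + q) = p * p + q * q + 2 * (p * q) by ring.
rewrite e2; rewrite e in h1; clear -h1 h4 h5; lra.
Qed.
Lemma hn_trsq A : nr (\tr (A *m A)) <= hn A * hn A.
Proof.
rewrite hn_sq tr2E !mul2E.
set p := A 0 0; set q := A 0 1; set r := A 1 0; set s := A 1 1.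
have e : p * p + q * r + (r * q + s * s) = p * p + s * s + 2%:R * (q * r) by ring.
rewrite e.
apply: (le_trans (nrD _ _)); rewrite -!nrM.
apply: (le_trans (lerD (nrD _ _) (lexx _))).
have n2 : nr 2 = 2 :> R by apply: val_inj; rewrite /= ?rmorph_nat normr_nat.
rewrite !nrM n2.
have := sqr_ge0 (nr q - nr r); rewrite expr2.
move: (nr p) (nr q) (nr r) (nr s) => a b c d h.
have e3 : (b - c) * (b - c) = b * b + c * c - 2 * (b * c) by ring.
rewrite e3 in h; clear -h; lra.
Qed.

Lemma nr_split z u w : z = u + w -> nr z <= nr u + nr w.
Proof. by move=> ->; apply: nrD. Qed.
Lemma nr_nat n : nr n%:R = n%:R :> R.
Proof. by apply: val_inj; rewrite /= ?rmorph_nat normr_nat. Qed.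
Lemma nr1 : nr 1 = 1 :> R.
Proof. by apply: val_inj; rewrite /= normr1. Qed.
Lemma parallel (p s : C) : nr (p + s) * nr (p + s) + nr (p - s) * nr (p - s)
  = 2 * (nr p * nr p) + 2 * (nr s * nr s).
Proof.
apply: val_inj; rewrite !rmorphD !rmorphM rmorph_nat /= -!expr2 !normCK.
rewrite !rmorphD !rmorphN /=; ring.
Qed.

Lemma eE (A : 'M[C]_2) i j : (A *m A - A) i j = A i 0 * A 0 j + A i 1 * A 1 j - A i j.
Proof. by rewrite mxE mul2E mxE. Qed.

Definition d2 (A : 'M[C]_2) := A 0 0 * A 1 1 - A 0 1 * A 1 0.

Lemma scalarA (A : 'M[C]_2) (dl : R) : 0 <= dl -> dl < 3/100 ->
  hn (A *m A - A) <= dl -> nr (\tr A - 2%:R) < 95/100 ->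
  83/100 <= nr (d2 A) /\ nr (\tr A - 1) <= 11/10.
Proof.
move=> d0 d3 hE hx.
set E := A *m A - A.
have hE2 : hn E * hn E <= dl * dl by apply: prod_lb; rewrite ?hn_ge0.
rewrite hn_sq in hE2.
set tau := \tr A.
set tE := E 0 0 + E 1 1.
have hp := parallel (E 0 0) (E 1 1).
have disc : (E 0 0 - E 1 1) ^+ 2 + 4%:R * (E 0 1 * E 1 0) =
   (tau - 1) * (tau - 1) * (2%:R * tE - tau * (tau - 2%:R)).
  rewrite /tE /tau tr2E /E !eE; ring.
have hdisc : nr ((E 0 0 - E 1 1) ^+ 2 + 4%:R * (E 0 1 * E 1 0)) <=
    nr (E 0 0 - E 1 1) * nr (E 0 0 - E 1 1) + 4 * (nr (E 0 1) * nr (E 1 0)).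
  by apply: (le_trans (nrD _ _)); rewrite expr2 !nrM nr_nat.
rewrite disc !nrM in hdisc.
have amgm : 2 * (nr (E 0 1) * nr (E 1 0)) <= nr (E 0 1) * nr (E 0 1) + nr (E 1 0) * nr (E 1 0).
  have := sqr_ge0 (nr (E 0 1) - nr (E 1 0)); rewrite expr2.
  move: (nr (E 0 1)) (nr (E 1 0)) => a b h.
  have e : (a - b) * (a - b) = a * a + b * b - 2 * (a * b) by ring.
  rewrite e in h; clear -h; lra.
have key1 : nr tE * nr tE + nr (tau - 1) * nr (tau - 1) *
     nr (2%:R * tE - tau * (tau - 2%:R)) <= 2 * (dl * dl).
  move: hE2 hp hdisc amgm; rewrite /tE.
  move: (nr (E 0 0 + E 1 1)) (nr (E 0 0 - E 1 1)) (nr (E 0 0)) (nr (E 0 1))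
    (nr (E 1 0)) (nr (E 1 1)) (nr (tau - 1) * nr (tau - 1) * nr (2%:R * (E 0 0 + E 1 1) - tau * (tau - 2%:R)))
    => a b p q r s Q h1 h2 h3 h4.
  clear -h1 h2 h3 h4; lra.
have kb : nr tau * nr (tau - 2%:R) <= nr (2%:R * tE - tau * (tau - 2%:R)) + 2 * nr tE.
  have h : tau * (tau - 2%:R) = 2%:R * tE + - (2%:R * tE - tau * (tau - 2%:R)) by ring.
  have := nr_split h; rewrite nrN !nrM nr_nat.
  move: (nr tau * nr (tau - 2%:R)) => a.
  move: (nr (2%:R * tE - tau * (tau - 2%:R))) => b.
  move=> hh; clear -hh; lra.
have k1 : 1 <= nr (tau - 1) + nr (tau - 2%:R).
  rewrite -nr1 -(nrN (tau - 2%:R)); apply: nr_split; ring.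
have k2 : 2 <= nr tau + nr (tau - 2%:R).
  rewrite -(nr_nat 2) -(nrN (tau - 2%:R)); apply: nr_split; ring.
have k3 : nr (tau - 1) <= nr (tau - 2%:R) + 1.
  rewrite -nr1; apply: nr_split; ring.
have k4 : nr tau * nr (tau - 1) <= 2 * nr (d2 A) + nr tE.
  rewrite -nrM -(nr_nat 2) -nrM; apply: nr_split.
  rewrite /tE /tau tr2E /E /d2 !eE; ring.
apply: (RL1 (x := nr (tau - 2%:R)) (v := nr (tau - 1)) (D := nr (d2 A)) (dl := dl) (w := nr tau) (T := nr tE) (K := nr (2%:R * tE - tau * (tau - 2%:R))))
  => //; rewrite ?nr_ge0 ?expr2 //.
Qed.

Lemma ord2 (i : 'I_2) : i = 0 \/ i = 1.
Proof. by case: i => [[|[|//]]] ?; [left|right]; apply: val_inj. Qed.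

Lemma CH2 (A : 'M[C]_2) : A *m A = \tr A *: A - (d2 A)%:M.
Proof.
apply/matrixP => i j; rewrite mul2E !mxE tr2E /d2.
by case: (ord2 i) => ->; case: (ord2 j) => -> /=; ring.
Qed.

Lemma idX (A X : 'M[C]_2) :
  d2 A *: X = (\tr A - 1) *: (A *m X) - (A *m A - A) *m X.
Proof.
rewrite mulmxBl CH2 mulmxBl -scalemxAl mul_scalar_mx.
move: (A *m X) => Y.
apply/matrixP => i j; rewrite !mxE; ring.
Qed.

Lemma XBound (A G F : 'M[C]_2) (dl : R) : 0 <= dl -> dl < 3/100 ->
  hn (A *m A - A) <= dl -> nr (\tr A - 2%:R) < 95/100 ->
  hn (A *m G - G) <= dl -> hn (A *m F - G) <= dl ->
  hn (G - F) <= 11/4 * dl.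
Proof.
move=> d0 d3 hE hx hG hF.
have [hD hv] := scalarA d0 d3 hE hx.
have hAX : hn (A *m (G - F)) <= 2 * dl.
  have -> : A *m (G - F) = (A *m G - G) - (A *m F - G).
    by rewrite mulmxBr opprB addrA subrK.
  apply: (le_trans (hn_add _ _)); rewrite hn_opp; clear -hG hF; lra.
have e := idX A (G - F).
have h1 : hn (d2 A *: (G - F)) <= nr (\tr A - 1) * hn (A *m (G - F))
     + hn (A *m A - A) * hn (G - F).
  rewrite e; apply: (le_trans (hn_add _ _)); rewrite hn_opp hn_scale.
  by apply: lerD => //; apply: hn_mul.
rewrite hn_scale in h1.
have p1 : nr (\tr A - 1) * hn (A *m (G - F)) <= 11/10 * (2 * dl).
  by apply: ler_pM; rewrite ?nr_ge0 ?hn_ge0.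
have p2 : hn (A *m A - A) * hn (G - F) <= dl * hn (G - F).
  by apply: ler_wpM2r; rewrite ?hn_ge0.
have p3 : dl * hn (G - F) <= 3/100 * hn (G - F).
  by apply: ler_wpM2r; rewrite ?hn_ge0 ?ltW.
have p4 : 83/100 * hn (G - F) <= nr (d2 A) * hn (G - F).
  by apply: ler_wpM2r; rewrite ?hn_ge0.
move: h1 p1 p2 p3 p4.
move: (nr (d2 A) * hn (G - F)) (nr (\tr A - 1) * hn (A *m (G - F)))
  (hn (A *m A - A) * hn (G - F)) (dl * hn (G - F)) (hn (G - F)) => a b c f h.
clear -d0; move=> *; lra.
Qed.

Lemma trP (P : 'M[C]_2) : P *m P = P -> \rank P = 1%N -> \tr P = 1.
Proof.
move=> hP hr.
have hs : (\tr P - 1) *: P = (d2 P)%:M.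
  have e := CH2 P; rewrite hP in e.
  rewrite scalerBl scale1r {3}e opprB addrC subrK //.
have hd : d2 P = 0.
  case: (eqVneq (d2 P) 0) => // nz.
  have : P *m (((\tr P - 1) / d2 P)%:M) = 1%:M.
    rewrite mul_mx_scalar mulrC -scalerA hs scale_scalar_mx mulVf //.
  move/mulmx1_unit => [/mxrank_unit]; rewrite hr //.
have P0 : P != 0 by rewrite -mxrank_eq0 hr.
have : (\tr P - 1) *: P == 0 by rewrite hs hd raddf0.
rewrite scalemx_eq0 (negPf P0) orbF subr_eq0 => /eqP //.
Qed.

Lemma MM (Q : 'M[C]_2) : Q *m Q = Q -> (Q - (1%:M - Q)) *m (Q - (1%:M - Q)) = 1%:M.
Proof.
move=> hQ.
rewrite !mulmxBl !mulmxBr !mul1mx !mulmx1 hQ !subrr.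
by rewrite !subr0 addrAC subrr sub0r opprK addrC subrK.
Qed.

Lemma key (S : Type) (mul : S -> S -> S) (theta : S -> 'M[C]_2) (delta : C) (Q : 'M[C]_2)
  (hS : is_semilattice mul) (hd0 : 0 <= delta) (hd1 : delta < 3%:R / 100%:R)
  (htheta : forall e f : S, hsnorm (theta e *m theta f - theta (mul e f)) <= delta)
  (hQ : Q *m Q = Q) (htrQ : \tr Q = 1)
  (hS1 : forall x : S, Sk theta 1 x ->
           in_cball Q (12%:R * delta) (theta x) \/
           in_cball (1%:M - Q) (12%:R * delta) (theta x))
  (e : S) (he : Sk theta 2 e) (f : S) :
  in_cball Q (12%:R * delta) (theta f) -> in_cball Q (12%:R * delta) (theta (mul e f)).
Proof.
move=> hf.
case: hS => hA [hC hI].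
pose dl : R := Rl (ger0_real hd0).
have dl0 : 0 <= dl by rewrite leE.
have dl3 : dl < 3/100 by rewrite ltE fmorph_div !rmorph_nat.
have cb : forall M, (hsnorm M <= 12%:R * delta) = (hn M <= 12 * dl).
  by move=> M; rewrite leE rmorphM rmorph_nat.
have db : forall M, (hsnorm M <= delta) = (hn M <= dl) by [].
have sk : forall x k, Sk theta k x = (nr (\tr (theta x) - k%:R) < 95/100).
  by move=> x k; rewrite /Sk ltE fmorph_div !rmorph_nat.
rewrite /in_cball in hf hS1 *.
have hE : hn (theta e *m theta e - theta e) <= dl.
  by rewrite -db; have := htheta e e; rewrite hI.
have hG : hn (theta e *m theta (mul e f) - theta (mul e f)) <= dl.
  by rewrite -db; have := htheta e (mul e f); rewrite hA hI.
have hF : hn (theta e *m theta f - theta (mul e f)) <= dl by rewrite -db.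
have hx : nr (\tr (theta e) - 2%:R) < 95/100 by rewrite -sk.
have X := XBound dl0 dl3 hE hx hG hF.
rewrite cb in hf.
set F := theta f in hf X; set G := theta (mul e f) in X *.
have hQG : hn (Q - G) <= 12 * dl + 11/4 * dl.
  have -> : Q - G = (Q - F) + (F - G) by rewrite addrA subrK.
  apply: (le_trans (hn_add _ _)); rewrite (hn_sub F G); exact: lerD.
have hh : hn (Q - G) <= 4425/10000.
  by apply: (le_trans hQG); clear -dl3 dl0; lra.
have hS1G : Sk theta 1 (mul e f).
  rewrite sk -/G.
  have trB : \tr (Q - G) = \tr Q - \tr G by rewrite !tr2E !mxE; ring.
  have -> : \tr G - 1%:R = - \tr (Q - G) by rewrite trB htrQ opprB.
  rewrite nrN; have t := hn_tr (Q - G).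
  have t2 : hn (Q - G) * hn (Q - G) <= 4425/10000 * (4425/10000).
    by apply: prod_lb; rewrite ?hn_ge0.
  case: (lerP (95/100) (nr (\tr (Q - G)))) => // h95.
  have t3 : 95/100 * (95/100) <= nr (\tr (Q - G)) * nr (\tr (Q - G)).
    by apply: prod_lb => //; clear; lra.
  move: t t2 t3; move: (nr (\tr (Q - G)) * nr (\tr (Q - G))) (hn (Q - G) * hn (Q - G)) => a b.
  by clear; move=> *; lra.
case: (hS1 _ hS1G) => [//|h2].
exfalso.
rewrite cb in h2.
have hM : hn (Q - (1%:M - Q)) <= 4425/10000 + 12 * dl.
  have -> : Q - (1%:M - Q) = (Q - G) + (G - (1%:M - Q)) by rewrite addrA subrK.
  apply: (le_trans (hn_add _ _)); rewrite (hn_sub G); exact: lerD.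
have hM2 : hn (Q - (1%:M - Q)) <= 81/100 by apply: (le_trans hM); clear -dl3 dl0; lra.
have t := hn_trsq (Q - (1%:M - Q)); rewrite MM // mxtrace1 nr_nat in t.
have t2 : hn (Q - (1%:M - Q)) * hn (Q - (1%:M - Q)) <= 81/100 * (81/100).
  by apply: prod_lb; rewrite ?hn_ge0.
move: t t2; move: (hn (Q - (1%:M - Q)) * hn (Q - (1%:M - Q))) => a.
by clear; move=> *; lra.
Qed.
End M.
Unset Implicit Arguments.
Theorem propositionp (C : numClosedFieldType) (S : Type) (mul : S -> S -> S)
  (theta : S -> 'M[C]_2) (delta : C) (P : 'M[C]_2)
  (hS : is_semilattice mul)
  (hd0 : 0 <= delta) (hd1 : delta < 3%:R / 100%:R)
  (htheta : forall e f : S, hsnorm (theta e *m theta f - theta (mul e f)) <= delta)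
  (hPidem : P *m P = P) (hPrank : \rank P = 1%N)
  (hS1 : forall x : S, Sk theta 1 x ->
           in_cball P (12%:R * delta) (theta x) \/
           in_cball (1%:M - P) (12%:R * delta) (theta x))
  (e : S) (he : Sk theta 2 e) :
  (forall f : S, in_cball P (12%:R * delta) (theta f) ->
                 in_cball P (12%:R * delta) (theta (mul e f))) /\
  (forall f : S, in_cball (1%:M - P) (12%:R * delta) (theta f) ->
                 in_cball (1%:M - P) (12%:R * delta) (theta (mul e f))).
Proof.
have trP1 := trP hPidem hPrank.
split.
  by move=> f; apply: (key hS hd0 hd1 htheta hPidem trP1 hS1 he).
have hQ : (1%:M - P) *m (1%:M - P) = 1%:M - P.
  by rewrite mulmxBl !mulmxBr !mul1mx ?mulmx1 hPidem subrr subr0.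
have trQ : \tr (1%:M - P) = 1.
  have -> : \tr (1%:M - P) = \tr (1%:M : 'M[C]_2) - \tr P by rewrite !tr2E !mxE; ring.
  rewrite mxtrace1 trP1; ring.
have e1 : 1%:M - (1%:M - P) = P by rewrite opprB addrC subrK.
move=> f; apply: (key hS hd0 hd1 htheta hQ trQ _ he) => x hx.
by rewrite e1; case: (hS1 x hx); [right|left].
Qed.
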